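(* Let $n\ge p\ge1$, $0<\varepsilon<1$, $\lambda>0$. Let $X\in\mathbb{R}^{n\times p}$ with $\|X^\top X-I_p\|\le\varepsilon$, let $A\in\mathbb{R}^{n\times n}$ be skew-symmetric, let $F(X,A)=AX+\lambda X(X^\top X-I_p)$, and for a step size $\eta>0$ set $\tilde X=X-\eta F(X,A)$. Let $g=\|F(X,A)\|$ and $d=\|X^\top X-I_p\|$. If $$\eta\le\eta(X):=\min\left\{\frac{\lambda d(1-d)+\sqrt{\lambda^2d^2(1-d)^2+g^2(\varepsilon-d)}}{g^2},\ \frac{1}{2\lambda}\right\},$$ (with the first term interpreted as $+\infty$ when $g=0$), then $\|\tilde X^\top\tilde X-I_p\|\le\varepsilon$.
   Context: $\|\cdot\|$ denotes the Frobenius norm. *)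

(* Defs.v *)
From mathcomp Require Import all_boot all_order all_algebra.
From mathcomp Require Import reals.
Set Implicit Arguments. Unset Strict Implicit. Unset Printing Implicit Defensive.
Import Order.TTheory GRing.Theory Num.Theory.
Local Open Scope ring_scope.

Definition fnorm (R : realType) (m n : nat) (M : 'M[R]_(m, n)) : R :=
  Num.sqrt (\sum_(i < m) \sum_(j < n) M i j ^+ 2).

Definition Fmap (R : realType) (n p : nat) (lam : R)
  (X : 'M[R]_(n, p)) (A : 'M[R]_n) : 'M[R]_(n, p) :=
  A *m X + lam *: (X *m (X^T *m X - 1%:M)).

(* Main.v *)
Require Import Defs.
From mathcomp Require Import all_boot all_order all_algebra.
From mathcomp Require Import reals.
From mathcomp Require Import ring lra.
Import Order.TTheory GRing.Theory Num.Theory.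
Local Open Scope ring_scope.

Section Aux.
Local Set Implicit Arguments.
Local Unset Strict Implicit.
Variable R : realType.

Lemma cs_sum (I : finType) (a b : I -> R) :
  (\sum_i a i * b i) ^+ 2 <= (\sum_i a i ^+ 2) * (\sum_i b i ^+ 2).
Proof.
have H : 0 <= \sum_i \sum_j (a i * b j - a j * b i) ^+ 2.
  by apply: sumr_ge0 => i _; apply: sumr_ge0 => j _; exact: sqr_ge0.
set S1 := \sum_i \sum_j a i ^+ 2 * b j ^+ 2.
set S2 := \sum_i \sum_j (a i * b i) * (a j * b j).
have E1 : (\sum_i a i ^+ 2) * (\sum_i b i ^+ 2) = S1 by rewrite big_distrlr.
have E2 : (\sum_i a i * b i) ^+ 2 = S2 by rewrite expr2 big_distrlr.
have E3 : \sum_i \sum_j a j ^+ 2 * b i ^+ 2 = S1 by rewrite exchange_big.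
have E : \sum_i \sum_j (a i * b j - a j * b i) ^+ 2 =
   S1 + \sum_i \sum_j a j ^+ 2 * b i ^+ 2 - 2 * S2.
  rewrite /S1 /S2 mulr_sumr -big_split -sumrB /=.
  apply: eq_bigr => i _.
  rewrite mulr_sumr -big_split -sumrB /=.
  apply: eq_bigr => j _; ring.
rewrite E1 E2; rewrite E E3 in H; lra.
Qed.

Definition fn2 {m n} (M : 'M[R]_(m, n)) := \sum_(i < m) \sum_(j < n) M i j ^+ 2.

Lemma fn2_ge0 m n (M : 'M[R]_(m, n)) : 0 <= fn2 M.
Proof. by apply: sumr_ge0 => i _; apply: sumr_ge0 => j _; exact: sqr_ge0. Qed.

Lemma fnormE m n (M : 'M[R]_(m, n)) : fnorm M = Num.sqrt (fn2 M).
Proof. by []. Qed.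

Lemma fnorm_ge0 m n (M : 'M[R]_(m, n)) : 0 <= fnorm M.
Proof. exact: sqrtr_ge0. Qed.

Lemma le_sqrt_r (x y : R) : 0 <= y -> x <= y ^+ 2 -> Num.sqrt x <= y.
Proof.
move=> y0 h; rewrite -(ger0_norm y0) -sqrtr_sqr.
by rewrite ler_sqrt ?sqr_ge0.
Qed.

Lemma fnormD m n (M N : 'M[R]_(m, n)) : fnorm (M + N) <= fnorm M + fnorm N.
Proof.
rewrite !fnormE; apply: le_sqrt_r; first by rewrite addr_ge0 ?sqrtr_ge0.
set c := \sum_i \sum_j M i j * N i j.
have E : fn2 (M + N) = fn2 M + fn2 N + 2 * c.
  rewrite /fn2 /c mulr_sumr -!big_split /=; apply: eq_bigr => i _.
  rewrite mulr_sumr -!big_split /=; apply: eq_bigr => j _.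
  rewrite mxE; ring.
have cs : c ^+ 2 <= fn2 M * fn2 N.
  have := @cs_sum ('I_m * 'I_n)%type (fun p => M p.1 p.2) (fun p => N p.1 p.2).
  by rewrite /c /fn2 !pair_bigA.
have hc : c <= Num.sqrt (fn2 M) * Num.sqrt (fn2 N).
  rewrite -sqrtrM ?fn2_ge0 //.
  apply: le_trans (ler_norm c) _.
  by rewrite -sqrtr_sqr ler_sqrt // mulr_ge0 ?fn2_ge0.
rewrite E sqrrD !sqr_sqrtr ?fn2_ge0 //.
lra.
Qed.

Lemma fnormZ m n (a : R) (M : 'M[R]_(m, n)) : fnorm (a *: M) = `|a| * fnorm M.
Proof.
rewrite !fnormE.
have -> : fn2 (a *: M) = a ^+ 2 * fn2 M.
  rewrite /fn2 mulr_sumr; apply: eq_bigr => i _.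
  rewrite mulr_sumr; apply: eq_bigr => j _; rewrite mxE; ring.
by rewrite sqrtrM ?sqr_ge0 // sqrtr_sqr.
Qed.

Lemma fnormB m n (M N : 'M[R]_(m, n)) : fnorm (M - N) <= fnorm M + fnorm N.
Proof.
apply: le_trans (fnormD M (- N)) _.
by rewrite -scaleN1r fnormZ normrN normr1 mul1r.
Qed.

Lemma fnorm_tr m n (M : 'M[R]_(m, n)) : fnorm M^T = fnorm M.
Proof.
rewrite !fnormE /fn2 exchange_big /=.
by apply: congr1; apply: eq_bigr => i _; apply: eq_bigr => j _; rewrite mxE.
Qed.

Lemma fnormM m n k (M : 'M[R]_(m, n)) (N : 'M[R]_(n, k)) :
  fnorm (M *m N) <= fnorm M * fnorm N.
Proof.
rewrite !fnormE -sqrtrM ?fn2_ge0 // ler_sqrt; last by rewrite mulr_ge0 ?fn2_ge0.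
rewrite [fn2 N]/fn2 exchange_big /fn2 big_distrlr /=.
apply: ler_sum => i _.
apply: ler_sum => j _.
rewrite mxE.
exact: (cs_sum (fun l => M i l) (fun l => N l j)).
Qed.

End Aux.

Lemma key_identity (R : realType) (n p : nat) (lam eta : R)
  (X : 'M[R]_(n, p)) (A : 'M[R]_n) :
  A^T = - A ->
  let F := Fmap lam X A in
  let S := X^T *m X - 1%:M in
  let Xt := X - eta *: F in
  Xt^T *m Xt - 1%:M =
   (1 - 2 * eta * lam) *: S - (2 * eta * lam) *: (S *m S) + eta ^+ 2 *: (F^T *m F).
Proof.
move=> hA F S Xt.
have hS : S^T = S by rewrite /S linearB /= trmx1 trmx_mul trmxK.
have h1 : X^T *m F = X^T *m A *m X + lam *: (X^T *m X *m S).
  by rewrite /F /Fmap mulmxDr -scalemxAr !mulmxA.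
have h2 : F^T *m X = - (X^T *m A *m X) + lam *: (S *m (X^T *m X)).
  rewrite /F /Fmap linearD linearZ /= !trmx_mul hA hS mulmxDl -scalemxAl.
  by rewrite -!mulmxA mulNmx mulmxN.
have hXt : Xt^T *m Xt = X^T *m X - eta *: (X^T *m F) + (eta * eta) *: (F^T *m F)
                       - eta *: (F^T *m X).
  have hT : Xt^T = X^T - eta *: F^T by rewrite /Xt linearB linearZ.
  rewrite hT /Xt mulmxBl !mulmxBr -!scalemxAl -!scalemxAr scalerA.
  by rewrite opprB addrA.
rewrite hXt h1 h2 /S !mulmxBl !mulmxBr !mulmx1 !mul1mx.
move: (F^T *m F) (X^T *m A *m X) (X^T *m X *m (X^T *m X)) (X^T *m X) => G B Q P.
apply/matrixP => i j; rewrite !mxE; ring.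
Qed.

Theorem lemma3 (R : realType) (n p : nat) (eps lam eta : R)
  (X : 'M[R]_(n, p)) (A : 'M[R]_n) :
  (1 <= p)%N -> (p <= n)%N ->
  0 < eps -> eps < 1 -> 0 < lam -> 0 < eta ->
  fnorm (X^T *m X - 1%:M) <= eps ->
  A^T = - A ->
  let g := fnorm (Fmap lam X A) in
  let d := fnorm (X^T *m X - 1%:M) in
  (g != 0 ->
     eta <= (lam * d * (1 - d)
             + Num.sqrt (lam ^+ 2 * d ^+ 2 * (1 - d) ^+ 2 + g ^+ 2 * (eps - d)))
            / g ^+ 2) ->
  eta <= 1 / (2 * lam) ->
  let Xt := X - eta *: Fmap lam X A in
  fnorm (Xt^T *m Xt - 1%:M) <= eps.
Proof.
move=> _ _ eps0 eps1 lam0 eta0 hd hA g d heta heta2.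
have KI := @key_identity _ _ _ lam eta X A hA; simpl in KI.
rewrite /= KI.
set S := X^T *m X - 1%:M.
set F := Fmap lam X A.
have d0 : 0 <= d by exact: fnorm_ge0.
have g0 : 0 <= g by exact: fnorm_ge0.
have hel : eta * lam <= 1 / 2.
  have : eta * (2 * lam) <= 1.
    by rewrite -ler_pdivlMr ?mulr_gt0 // mul1r; move: heta2; rewrite mul1r.
  lra.
have hSS : fnorm (S *m S) <= d * d by exact: fnormM.
have hG : fnorm (F^T *m F) <= g * g by rewrite -[X in X * _]fnorm_tr; exact: fnormM.
have step : fnorm ((1 - 2 * eta * lam) *: S - (2 * eta * lam) *: (S *m S)
                   + eta ^+ 2 *: (F^T *m F))
            <= (1 - 2 * eta * lam) * d + (2 * eta * lam) * (d * d) + eta ^+ 2 * (g * g).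
  apply: le_trans (fnormD _ _) _.
  apply: lerD; last first.
    by rewrite fnormZ ger0_norm ?sqr_ge0 // ler_wpM2l ?sqr_ge0.
  apply: le_trans (fnormB _ _) _.
  rewrite !fnormZ ger0_norm; last lra.
  rewrite ger0_norm; last by rewrite !mulr_ge0 // ltW.
  apply: lerD; first by [].
  by rewrite ler_wpM2l // !mulr_ge0 // ltW.
apply: le_trans step _.
have hde : d <= eps by [].
have bd0 : 0 <= lam * d * (1 - d).
  apply: mulr_ge0; first by apply: mulr_ge0 => //; exact: ltW.
  rewrite subr_ge0; exact: le_trans hde (ltW eps1).
have [gz|gnz] := eqVneq g 0.
  rewrite gz; nra.
have g2 : 0 < g ^+ 2 by rewrite exprn_gt0 // lt0r gnz.
move: (heta gnz); rewrite ler_pdivlMr //.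
set b := lam * d * (1 - d).
set s := Num.sqrt _.
have s0 : 0 <= s by exact: sqrtr_ge0.
have ss : s ^+ 2 = b ^+ 2 + g ^+ 2 * (eps - d).
  rewrite /s sqr_sqrtr /b; first by rewrite !exprMn.
  apply: addr_ge0.
    by rewrite -!exprMn sqr_ge0.
  by rewrite mulr_ge0 ?sqr_ge0 // subr_ge0.
move=> ht.
set t := eta * g ^+ 2.
have t0 : 0 <= t by rewrite mulr_ge0 ?ltW.
have key : t ^+ 2 - 2 * b * t <= g ^+ 2 * (eps - d).
  have [tb|tb] := lerP t b.
    have : t * (t - 2 * b) <= 0 by rewrite mulr_ge0_le0 //; lra.
    have : 0 <= g ^+ 2 * (eps - d) by rewrite mulr_ge0 ?sqr_ge0 // subr_ge0.
    nra.
  have : (t - b) ^+ 2 <= s ^+ 2.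
    have ht' : t <= b + s by [].
    rewrite ler_sqr ?nnegrE; lra.
  rewrite ss => h; nra.
have : g ^+ 2 * (eta ^+ 2 * g ^+ 2 - 2 * eta * b) <= g ^+ 2 * (eps - d).
  move: key; rewrite /t; nra.
rewrite ler_pM2l // /b => h.
nra.
Qed.
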